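(* Let $V=V(\pi)$ be the finite-dimensional irreducible representation of $Y(\mathfrak{g})$ with Drinfeld polynomials $\pi=(\pi_1(u),\dots,\pi_l(u))$ and highest weight vector $v^+$, and let $\lambda_\pi=\sum_{i\in I}\deg(\pi_i)\,\omega_i$. Let $w=s_{r_1}s_{r_2}\cdots s_{r_p}$ be a reduced expression of an element $w$ of the Weyl group of $\mathfrak{g}$. For $1\le j\le p$ put $\sigma_j=s_{r_{j+1}}\cdots s_{r_p}$ and write $\sigma_j(\lambda_\pi)=m_j\omega_{r_j}+\sum_{n\ne r_j}c_n\omega_n$, and put $$v_{\sigma_j(\lambda_\pi)}=(x^-_{r_{j+1},0})^{m_{j+1}}(x^-_{r_{j+2},0})^{m_{j+2}}\cdots(x^-_{r_p,0})^{m_p}v^+ .$$ Then for every $1\le j\le p$, $Y_{r_j}\big(v_{\sigma_j(\lambda_\pi)}\big)$ is a highest weight representation of $Y_{r_j}$ (with highest weight vector $v_{\sigma_j(\lambda_\pi)}$).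
   Context: $\mathfrak{g}$ is a complex simple Lie algebra of rank $l$, $I=\{1,\dots,l\}$, Cartan matrix $A=(a_{ij})$, $D=\operatorname{diag}(d_1,\dots,d_l)$ with coprime positive integers $d_i$ and $DA$ symmetric; $\omega_i$ are the fundamental weights, $\alpha_i$ the simple roots, $s_i$ the simple reflections. The Yangian $Y(\mathfrak{g})$ is the associative $\mathbb{C}$-algebra with generators $x^\pm_{i,r},h_{i,r}$ ($i\in I$, $r\ge0$) and relations: $[h_{i,r},h_{j,s}]=0$, $[h_{i,0},x^\pm_{j,s}]=\pm d_ia_{ij}x^\pm_{j,s}$, $[x^+_{i,r},x^-_{j,s}]=\delta_{ij}h_{i,r+s}$, $[h_{i,r+1},x^\pm_{j,s}]-[h_{i,r},x^\pm_{j,s+1}]=\pm\frac12d_ia_{ij}(h_{i,r}x^\pm_{j,s}+x^\pm_{j,s}h_{i,r})$, $[x^\pm_{i,r+1},x^\pm_{j,s}]-[x^\pm_{i,r},x^\pm_{j,s+1}]=\pm\frac12d_ia_{ij}(x^\pm_{i,r}x^\pm_{j,s}+x^\pm_{j,s}x^\pm_{i,r})$, and for $i\neq j$, $m=1-a_{ij}$, $\sum_{\pi\in S_m}[x^\pm_{i,r_{\pi(1)}},[x^\pm_{i,r_{\pi(2)}},\dots,[x^\pm_{i,r_{\pi(m)}},x^\pm_{j,s}]\cdots]]=0$. Let $h_i(u)=1+\sum_{r\ge0}h_{i,r}u^{-r-1}$. $Y_i$ denotes the subalgebra generated by $x^\pm_{i,r},h_{i,r}$ ($r\ge0$); it is isomorphic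 to $Y(\mathfrak{sl}_2)$. A vector $v$ in a $Y_i$-module generates a highest weight representation $Y_i(v)$ of $Y_i$ if $x^+_{i,r}v=0$ and $h_{i,r}v\in\mathbb{C}v$ for all $r\ge0$. For an $l$-tuple $\pi$ of monic polynomials, $V(\pi)$ is the unique finite-dimensional irreducible $Y(\mathfrak{g})$-module generated by a vector $v^+$ with $x^+_{i,r}v^+=0$ for all $i,r$ and $h_i(u)v^+=\frac{\pi_i(u+d_i)}{\pi_i(u)}v^+$ (Laurent expansion at $u=\infty$). *)

(* Defs.v *)
From HB Require Import structures.
From mathcomp Require Import all_boot all_order all_algebra all_fingroup.
From mathcomp Require Import reals.
From mathcomp.real_closed Require Import complex.
Set Implicit Arguments. Unset Strict Implicit. Unset Printing Implicit Defensive.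
Import Order.TTheory GRing.Theory Num.Theory.
Local Open Scope ring_scope.

(* A generalized Cartan matrix is the Cartan matrix of a complex       *)
(* simple Lie algebra iff it is indecomposable and symmetrizable with  *)
(* positive definite symmetrization DA (finite type).                  *)
Definition simple_cartan_data (l : nat) (A : 'I_l -> 'I_l -> int)
    (d : 'I_l -> nat) : Prop :=
  [/\ (0 < l)%N,
      [/\ (forall i, A i i = 2),
          (forall i j, i != j -> A i j <= 0) &
          (forall i j, (A i j == 0) = (A j i == 0))],
      (forall S : {set 'I_l}, S != set0 -> S != setT ->
         exists i j, [/\ i \in S, j \notin S & A i j != 0]),
      [/\ (forall i, (0 < d i)%N),
          \big[gcdn/0%N]_i d i = 1%N &
          (forall i j, (d i)%:Z * A i j = (d j)%:Z * A j i)] &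
      (forall x : 'I_l -> rat, (exists i, x i != 0) ->
         0 < \sum_i \sum_j x i * (d i)%:R * (A i j)%:~R * x j)].

Section Yangian.
Variables (F : fieldType) (l n : nat).
Variables (A : 'I_l -> 'I_l -> int) (d : 'I_l -> nat).

Definition comm (X Y : 'M[F]_n) : 'M[F]_n := X *m Y - Y *m X.
Definition acomm (X Y : 'M[F]_n) : 'M[F]_n := X *m Y + Y *m X.

Definition da (i j : 'I_l) : F := ((d i)%:Z * A i j)%:~R.

Definition serre_sum (m : nat) (X : nat -> 'M[F]_n) (r : 'I_m -> nat)
    (Y : 'M[F]_n) : 'M[F]_n :=
  \sum_(s : {perm 'I_m}) foldr (fun k M => comm (X (r (s k))) M) Y (enum 'I_m).

(* The defining relations of Y(g), for operators on V = F^n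
   (column vectors, acting by left multiplication). *)
Definition yangian_rep (xp xm h : 'I_l -> nat -> 'M[F]_n) : Prop :=
  [/\ (forall i j r s, comm (h i r) (h j s) = 0) /\
      (forall i j s, comm (h i 0%N) (xp j s) = da i j *: xp j s
                  /\ comm (h i 0%N) (xm j s) = - (da i j *: xm j s)),
      (forall i j r s, comm (xp i r) (xm j s) = if i == j then h i (r + s)%N else 0),
      (forall i j r s,
         comm (h i r.+1) (xp j s) - comm (h i r) (xp j s.+1)
           = (da i j / 2) *: acomm (h i r) (xp j s)
      /\ comm (h i r.+1) (xm j s) - comm (h i r) (xm j s.+1)
           = - ((da i j / 2) *: acomm (h i r) (xm j s))),
      (forall i j r s,
         comm (xp i r.+1) (xp j s) - comm (xp i r) (xp j s.+1)
           = (da i j / 2) *: acomm (xp i r) (xp j s)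
      /\ comm (xm i r.+1) (xm j s) - comm (xm i r) (xm j s.+1)
           = - ((da i j / 2) *: acomm (xm i r) (xm j s))) &
      (forall i j, i != j ->
         forall (r : 'I_(absz (1 - A i j)) -> nat) (s : nat),
           serre_sum (xp i) r (xp j s) = 0 /\ serre_sum (xm i) r (xm j s) = 0)].

Definition is_submodule (xp xm h : 'I_l -> nat -> 'M[F]_n)
    (P : 'cV[F]_n -> Prop) : Prop :=
  [/\ P 0,
      (forall u v, P u -> P v -> P (u + v)),
      (forall (a : F) u, P u -> P (a *: u)) &
      (forall i r u, P u ->
         [/\ P (xp i r *m u), P (xm i r *m u) & P (h i r *m u)])].

Definition irreducible_rep (xp xm h : 'I_l -> nat -> 'M[F]_n) : Prop :=
  (0 < n)%N /\
  forall P, is_submodule xp xm h P -> (forall u, P u -> u = 0) \/ (forall u, P u).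

(* [laurent_ratio p q phi]: the Laurent expansion at u = oo of q(u)/p(u)
   is 1 + sum_{r>=0} phi r u^{-r-1}, i.e. p(u) (1 + sum_r phi r u^{-r-1}) = q(u)
   as formal Laurent series in u^{-1} (coefficientwise: u^m, m >= 0, and
   u^{-t}, t >= 1). *)
Definition laurent_ratio (p q : {poly F}) (phi : nat -> F) : Prop :=
  (forall m : nat,
     p`_m + \sum_(k < size p - m.+1) p`_(m + k.+1) * phi k = q`_m) /\
  (forall t : nat, (0 < t)%N ->
     \sum_(k < size p) p`_k * phi (k + t.-1)%N = 0).

Definition drinfeld_hw_vector (xp h : 'I_l -> nat -> 'M[F]_n)
    (pi : 'I_l -> {poly F}) (v : 'cV[F]_n) : Prop :=
  [/\ v != 0,
      (forall i r, xp i r *m v = 0) &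
      exists phi : 'I_l -> nat -> F, forall i,
        laurent_ratio (pi i) (pi i \Po ('X + ((d i)%:R)%:P)) (phi i) /\
        (forall r, h i r *m v = phi i r *: v)].

Definition hw_for_Yi (xp h : 'I_l -> nat -> 'M[F]_n) (i : 'I_l)
    (v : 'cV[F]_n) : Prop :=
  (forall r, xp i r *m v = 0) /\ (forall r, exists c : F, h i r *m v = c *: v).

End Yangian.

(* Weyl group acting on weights written in the basis of fundamental    *)
(* weights: lam = sum_k lam k * omega_k.                               *)
(* s_i(lam) = lam - <lam, alpha_i^vee> alpha_i, alpha_i = sum_k a_ki omega_k *)
Section Weyl.
Variables (l : nat) (A : 'I_l -> 'I_l -> int).

Definition sref (i : 'I_l) (lam : 'I_l -> int) : 'I_l -> int :=
  fun k => lam k - lam i * A k i.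

(* [weyl_act [:: r1; ...; rp] lam] = s_{r1} ( ... (s_{rp} lam)) *)
Definition weyl_act (w : seq 'I_l) (lam : 'I_l -> int) : 'I_l -> int :=
  foldr sref lam w.

(* w is a reduced expression: no shorter word gives the same Weyl group
   element (the Weyl group acts faithfully on the weight lattice). *)
Definition reduced_word (w : seq 'I_l) : Prop :=
  forall w' : seq 'I_l,
    (forall lam k, weyl_act w' lam k = weyl_act w lam k) -> (size w <= size w')%N.

(* For t = [:: r_{j+1}; ...; r_p] (= drop j w),
   lowered_vec t = (x^-_{r_{j+1},0})^{m_{j+1}} ... (x^-_{r_p,0})^{m_p} v,
   where m_k is the coefficient of omega_{r_k} in
   sigma_k(lam) = weyl_act (drop k w) lam. *)
Fixpoint lowered_vec (F : fieldType) (n : nat) (Xm : 'I_l -> 'M[F]_n)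
    (lam : 'I_l -> int) (v : 'cV[F]_n) (t : seq 'I_l) : 'cV[F]_n :=
  match t with
  | [::] => v
  | i :: t' => iter (absz (weyl_act t' lam i)) (fun u => Xm i *m u)
                    (lowered_vec Xm lam v t')
  end.

End Weyl.

(* Main.v *)
Require Import Defs.
From HB Require Import structures.
From mathcomp Require Import all_boot all_order all_algebra all_fingroup.
From mathcomp Require Import reals boolp.
From mathcomp.real_closed Require Import complex.
From mathcomp Require Import ring lra zify.
Set Implicit Arguments. Unset Strict Implicit. Unset Printing Implicit Defensive.
Import Order.TTheory GRing.Theory Num.Theory.
Local Open Scope ring_scope.
Section PolyLem.
Variable F : numFieldType.

Lemma XcP_size (c : F) i : (size (('X + c%:P) ^+ i) <= i.+1)%N.
Proof. by have := size_poly_exp_leq ('X + c%:P) i; rewrite size_XaddC /= mul1n. Qed.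

Lemma XcP_low (c : F) i k : (i < k)%N -> (('X + c%:P) ^+ i)`_k = 0.
Proof. by move=> hk; apply: nth_default; apply: leq_trans (XcP_size c i) _. Qed.

Lemma XcP_top (c : F) i : (('X + c%:P) ^+ i)`_i = 1.
Proof.
elim: i => [|i IH]; first by rewrite expr0 coefC.
by rewrite exprSr mulrDr coefD coefMX coefMC /= IH XcP_low // mul0r addr0.
Qed.

Lemma XcP_sub (c : F) i : (('X + c%:P) ^+ i.+1)`_i = i.+1%:R * c.
Proof.
elim: i => [|i IH].
  by rewrite exprSr expr0 mul1r coefD coefX coefC /= add0r mul1r.
rewrite exprSr mulrDr coefD coefMX coefMC /= IH XcP_top.
by rewrite [in RHS]mulrSr mulrDl.
Qed.

Lemma phi0 (p : {poly F}) (c : F) phi : p \is monic ->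
  laurent_ratio p (p \Po ('X + c%:P)) phi -> phi 0%N = c * ((size p).-1)%:R.
Proof.
move=> hm [h1 h2].
have hl : lead_coef p = 1 by apply/monicP.
have hs : (0 < size p)%N by rewrite size_poly_gt0 monic_neq0.
case E : (size p) hs => [|[|N]] // _.
  have := h2 1%N isT; rewrite E big_ord1 /= add0n.
  have -> : p`_0 = 1 by rewrite -hl lead_coefE E.
  by rewrite mul1r => ->; rewrite mulr0.
have := h1 N; rewrite E.
have -> : (N.+2 - N.+1)%N = 1%N by rewrite subSS subSn // subnn.
rewrite big_ord1 addn1.
have hp1 : p`_N.+1 = 1 by rewrite -hl lead_coefE E.
rewrite hp1 mul1r coef_comp_poly E !big_ord_recr /= big1.
  rewrite add0r XcP_top mulr1 XcP_sub hp1 mul1r => e.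
  by apply: (addrI p`_N); rewrite e mulrC.
by move=> i _; rewrite XcP_low ?mulr0.
Qed.
End PolyLem.
Section Comb.
Variables (l : nat) (A : 'I_l -> 'I_l -> int).
Hypothesis Aii : forall i, A i i = 2.

Definition weq (u v : seq 'I_l) := forall lam, weyl_act A u lam = weyl_act A v lam.

Lemma weyl_cat u v lam : weyl_act A (u ++ v) lam = weyl_act A u (weyl_act A v lam).
Proof. by rewrite /weyl_act foldr_cat. Qed.

Lemma sref_inv j lam : sref A j (sref A j lam) = lam.
Proof. apply: funext => k; rewrite /sref Aii; ring. Qed.

Lemma weyl_rev u lam : weyl_act A (rev u) (weyl_act A u lam) = lam.
Proof.
elim: u lam => [|x u IH] lam //=.
by rewrite rev_cons -cats1 weyl_cat /= sref_inv IH.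
Qed.

Lemma weyl_rev' u lam : weyl_act A u (weyl_act A (rev u) lam) = lam.
Proof. by rewrite -{1}(revK u) weyl_rev. Qed.

Lemma weq_refl u : weq u u. Proof. by []. Qed.
Lemma weq_sym u v : weq u v -> weq v u. Proof. by move=> h lam. Qed.
Lemma weq_trans u v w : weq u v -> weq v w -> weq u w.
Proof. by move=> h1 h2 lam; rewrite h1. Qed.
Lemma weq_catl u v c : weq u v -> weq (c ++ u) (c ++ v).
Proof. by move=> h lam; rewrite !weyl_cat h. Qed.
Lemma weq_catr u v c : weq u v -> weq (u ++ c) (v ++ c).
Proof. by move=> h lam; rewrite !weyl_cat h. Qed.
Lemma weq_ss s : weq [:: s; s] [::].
Proof. by move=> lam /=; rewrite sref_inv. Qed.

Definition red (u : seq 'I_l) := forall u', weq u' u -> (size u <= size u')%N.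

Lemma redE u : reduced_word A u <-> red u.
Proof.
split=> h u' hu; apply: h.
  by move=> lam k; rewrite hu.
by move=> lam; apply: funext => k; rewrite hu.
Qed.

Lemma red_suffix w1 t : red (w1 ++ t) -> red t.
Proof.
move=> h t' ht; have := h (w1 ++ t') (weq_catl w1 ht).
by rewrite !size_cat leq_add2l.
Qed.

Lemma red_prefix w1 t : red (w1 ++ t) -> red w1.
Proof.
move=> h t' ht; have := h (t' ++ t) (weq_catr t ht).
by rewrite !size_cat leq_add2r.
Qed.

Lemma weq_rev u v : weq u v -> weq (rev u) (rev v).
Proof.
move=> h lam.
by rewrite -{1}(weyl_rev' v lam) -h weyl_rev.
Qed.

Lemma red_rev u : red u -> red (rev u).
Proof.
move=> h u' hu; rewrite size_rev -(size_rev u'); apply: h.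
by have := weq_rev hu; rewrite revK.
Qed.

Definition evec (m : 'I_l) : 'I_l -> int := fun j => if j == m then 1 else 0.

Definition Mw u : 'M[int]_l := \matrix_(k, m) weyl_act A u (evec m) k.

Lemma sum_evec (f : 'I_l -> int) k : \sum_p (if p == k then 1 else 0) * f p = f k.
Proof.
rewrite (bigD1 k) //= eqxx mul1r big1 ?addr0 // => p /negbTE ->; by rewrite mul0r.
Qed.

Lemma Mw_cons j u : Mw (j :: u) = Mw [:: j] *m Mw u.
Proof.
apply/matrixP => k m; rewrite !mxE /= /sref.
under eq_bigr => p _ do rewrite !mxE /= /sref /evec.
under eq_bigr => p _ do rewrite mulrBl.
rewrite sumrB; congr (_ - _).
  by rewrite (eq_bigr (fun p => (if p == k then 1 else 0) * weyl_act A u (evec m) p)) ?sum_evec // => p _; rewrite (eq_sym k p).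
rewrite (bigD1 j) //= eqxx big1 ?addr0; first by rewrite mul1r mulrC.
by move=> p; rewrite eq_sym => /negbTE ->; rewrite !mul0r.
Qed.

Lemma Mw_nil : Mw [::] = 1%:M.
Proof. by apply/matrixP => k m; rewrite !mxE /= /evec; case: eqP. Qed.

Lemma det_Mw1 j : \det (Mw [:: j]) = -1.
Proof.
rewrite (expand_det_row _ j) (bigD1 j) //= big1 ?addr0.
  rewrite !mxE /= /sref /evec eqxx Aii /cofactor.
  have -> : row' j (col' j (Mw [:: j])) = 1%:M.
    apply/matrixP => a b; rewrite !mxE /= /sref /evec.
    have hne : (j == lift j b) = false by apply/negbTE/neq_lift.
    rewrite hne (inj_eq (@lift_inj _ j)) mul0r subr0; by case: (a == b).
  rewrite det1 mulr1 -signr_odd addnn odd_double expr0; ring.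
move=> m hm; have hm' : (j == m) = false by rewrite eq_sym; apply/negbTE.
by rewrite !mxE /= /sref /evec hm' mul0r subr0 mul0r.
Qed.

Lemma det_Mw u : \det (Mw u) = (-1) ^+ size u.
Proof.
elim: u => [|j u IH]; first by rewrite Mw_nil det1.
by rewrite Mw_cons det_mulmx IH det_Mw1 /= exprS.
Qed.

Lemma weq_odd u v : weq u v -> odd (size u) = odd (size v).
Proof.
move=> h.
have : Mw u = Mw v by apply/matrixP => k m; rewrite !mxE h.
move/(congr1 (fun M => \det M)); rewrite !det_Mw -signr_odd -[_ ^+ size v]signr_odd.
by case: (odd (size u)); case: (odd (size v)) => //= /eqP; rewrite ?expr1 ?expr0 // -?subr_eq0 //.
Qed.

End Comb.
Section Roots.
Variables (l : nat) (A : 'I_l -> 'I_l -> int) (d : 'I_l -> nat).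
Hypothesis Aii : forall i, A i i = 2.
Hypothesis dpos : forall i, (0 < d i)%N.
Hypothesis Aoff : forall i j, i != j -> A i j <= 0.
Hypothesis Azero : forall i j, (A i j == 0) = (A j i == 0).
Hypothesis dsym : forall i j, (d i)%:Z * A i j = (d j)%:Z * A j i.
Hypothesis posdef : forall x : 'I_l -> rat, (exists i, x i != 0) ->
         0 < \sum_i \sum_j x i * (d i)%:R * (A i j)%:~R * x j.

Definition rref (j : 'I_l) (c : 'I_l -> int) : 'I_l -> int :=
  fun k => c k - (if k == j then \sum_m A j m * c m else 0).
Definition ract (u : seq 'I_l) c := foldr rref c u.
Definition Ac (c : 'I_l -> int) : 'I_l -> int := fun k => \sum_m A k m * c m.

Lemma weyl_Ac u c : weyl_act A u (Ac c) = Ac (ract u c).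
Proof.
elim: u => [|j u IH] //=; rewrite IH; apply: funext => k.
rewrite /sref /Ac /rref.
under [in RHS]eq_bigr => m _ do rewrite mulrBr.
rewrite sumrB; congr (_ - _).
rewrite [RHS](bigD1 j) //= eqxx [X in _ + X]big1 ?addr0; first by rewrite mulrC.
by move=> m /negbTE ->; rewrite mulr0.
Qed.

Lemma rref_inv j c : rref j (rref j c) = c.
Proof.
apply: funext => k; rewrite /rref.
have -> : \sum_m A j m * (c m - (if m == j then \sum_m0 A j m0 * c m0 else 0))
   = - \sum_m A j m * c m.
  under eq_bigr => m _ do rewrite mulrBr.
  rewrite sumrB [X in _ - X](bigD1 j) //= eqxx [X in _ - (_ + X)]big1 ?addr0; first by rewrite Aii; ring.
  by move=> m /negbTE ->; rewrite mulr0.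
by case: (k == j); ring.
Qed.

Lemma ract_cat u v c : ract (u ++ v) c = ract u (ract v c).
Proof. by rewrite /ract foldr_cat. Qed.

Lemma ract_rev u c : ract (rev u) (ract u c) = c.
Proof.
elim: u c => [|x u IH] c //=.
by rewrite rev_cons -cats1 ract_cat /= rref_inv IH.
Qed.

Lemma ract_rev' u c : ract u (ract (rev u) c) = c.
Proof. by rewrite -{1}(revK u) ract_rev. Qed.

Lemma ract_lin u (a b : int) c1 c2 :
  ract u (fun k => a * c1 k + b * c2 k) = fun k => a * ract u c1 k + b * ract u c2 k.
Proof.
elim: u => [|j u IH] //=; rewrite IH; apply: funext => k; rewrite /rref.
have -> : \sum_m A j m * (a * ract u c1 m + b * ract u c2 m)
  = a * \sum_m A j m * ract u c1 m + b * \sum_m A j m * ract u c2 m.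
  rewrite !mulr_sumr -big_split /=; apply: eq_bigr => m _; ring.
by case: (k == j); ring.
Qed.

Lemma ract0 u : ract u (fun _ => 0) = fun _ => 0.
Proof.
have := ract_lin u 0 0 (fun _ => 0) (fun _ => 0).
have -> : (fun k : 'I_l => 0 * (fun _ : 'I_l => (0:int)) k + 0 * (fun _ : 'I_l => (0:int)) k) = (fun _ => 0).
  by apply: funext => k; rewrite mul0r addr0.
move=> ->; apply: funext => k; by rewrite !mul0r addr0.
Qed.

Lemma Ac_inj c : (forall k, Ac c k = 0) -> forall k, c k = 0.
Proof.
move=> h k; apply/eqP; apply/negPn/negP => hk.
have hx : exists i, ((fun k => (c k)%:~R) i : rat) != 0 by exists k; rewrite intr_eq0.
have := posdef hx.
have -> : \sum_i \sum_j ((c i)%:~R : rat) * (d i)%:R * (A i j)%:~R * (c j)%:~R = 0.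
  apply: big1 => i _.
  have -> : \sum_j ((c i)%:~R : rat) * (d i)%:R * (A i j)%:~R * (c j)%:~R
      = (c i)%:~R * (d i)%:R * (Ac c i)%:~R.
    rewrite /Ac rmorph_sum mulr_sumr; apply: eq_bigr => j _; rewrite rmorphM /=; ring.
  by rewrite h mulr0.
by rewrite ltxx.
Qed.

Lemma weq_ract u v : weq A u v -> forall c, ract u c = ract v c.
Proof.
move=> h c; apply: funext => k.
have H := Ac_inj (c := fun k => ract u c k - ract v c k).
apply/eqP; rewrite -subr_eq0; apply/eqP; apply: H => k'.
have e := congr1 (fun f => f k') (h (Ac c)); rewrite /= !weyl_Ac /Ac in e.
rewrite /Ac; under eq_bigr => m _ do rewrite mulrBr.
by rewrite sumrB e subrr.
Qed.

Definition pair (mu c : 'I_l -> int) := \sum_k c k * (d k)%:Z * mu k.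

Lemma pair_rref j mu c : pair (sref A j mu) (rref j c) = pair mu c.
Proof.
rewrite /pair /sref /rref.
set S := \sum_m A j m * c m.
have hS : \sum_k c k * (d k)%:Z * A k j = (d j)%:Z * S.
  rewrite /S mulr_sumr; apply: eq_bigr => k _.
  by rewrite -mulrA dsym; ring.
have -> : \sum_k (c k - (if k == j then S else 0)) * (d k)%:Z * (mu k - mu j * A k j)
  = \sum_k c k * (d k)%:Z * mu k - mu j * \sum_k c k * (d k)%:Z * A k j
    - \sum_k (if k == j then S * (d k)%:Z * (mu k - mu j * A k j) else 0).
  rewrite mulr_sumr -!sumrB; apply: eq_bigr => k _; case: (k == j); ring.
rewrite -big_mkcond big_pred1_eq Aii hS; ring.
Qed.

Lemma pair_inv u mu c : pair (weyl_act A u mu) (ract u c) = pair mu c.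
Proof. elim: u => [|j u IH] //=; by rewrite pair_rref. Qed.

Lemma not_red u : ~ red A u -> exists u', weq A u' u /\ (size u' < size u)%N.
Proof.
move=> h; apply: contrapT => h2; apply: h => u' hu.
rewrite leqNgt; apply/negP => hlt; apply: h2; by exists u'.
Qed.

Lemma red_step v s : red A v -> ~ red A (v ++ [:: s]) ->
  exists v', weq A v' (v ++ [:: s]) /\ (size v' + 1 = size v)%N.
Proof.
move=> hv /not_red [v'' [he hs]]; exists v''; split => //.
have hp := weq_odd Aii he.
have h2 : weq A (v'' ++ [:: s]) v.
  apply: (weq_trans (weq_catr [:: s] he)).
  rewrite -catA /=; move=> lam; by rewrite weyl_cat weq_ss // cats0.
have := hv _ h2; rewrite size_cat /= => h3.
move: hs hp; rewrite size_cat /= => hs hp.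
have : size v'' != size v.
  apply/negP => /eqP e; move: hp; rewrite e addn1 /=; by case: (odd (size v)).
lia.
Qed.

Lemma sum2 (s t : 'I_l) (f : 'I_l -> int) : s != t ->
  (forall i, i != s -> i != t -> f i = 0) -> \sum_i f i = f s + f t.
Proof.
move=> hst h; rewrite (bigD1 s) //= (bigD1 t) /=; last by rewrite eq_sym.
rewrite big1 ?addr0 // => i /andP [hs ht]; exact: h.
Qed.

Lemma sum2q (s t : 'I_l) (f : 'I_l -> rat) : s != t ->
  (forall i, i != s -> i != t -> f i = 0) -> \sum_i f i = f s + f t.
Proof.
move=> hst h; rewrite (bigD1 s) //= (bigD1 t) /=; last by rewrite eq_sym.
rewrite big1 ?addr0 // => i /andP [hs ht]; exact: h.
Qed.
Lemma posdefZ (x : 'I_l -> int) : (exists i, x i != 0) ->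
  0 < \sum_i \sum_j x i * (d i)%:Z * A i j * x j.
Proof.
move=> [i hi].
have hx : exists i, ((fun k => (x k)%:~R) i : rat) != 0 by exists i; rewrite intr_eq0.
have := posdef hx; rewrite -(ltr0z rat) rmorph_sum /=.
congr (_ < _); apply: eq_bigr => a _; rewrite rmorph_sum; apply: eq_bigr => b _.
by rewrite !rmorphM.
Qed.

Lemma cartan_ab s t : s != t -> A s t * A t s < 4.
Proof.
move=> hst.
pose C := (d s)%:Z * A s t.
pose x := fun k : 'I_l => if k == s then - C else if k == t then 2 * (d s)%:Z else 0.
have ht : (t == s) = false by rewrite eq_sym; exact: negbTE.
have hx : exists i, x i != 0.
  exists t; rewrite /x ht eqxx.
  have := dpos s; lia.
have := posdefZ hx.
rewrite (sum2 hst); last first.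
  by move=> i his hit; apply: big1 => j _; rewrite /x (negbTE his) (negbTE hit) !mul0r.
rewrite !(sum2 hst); first last.
- by move=> j hjs hjt; rewrite /x (negbTE hjs) (negbTE hjt) mulr0.
- by move=> j hjs hjt; rewrite /x (negbTE hjs) (negbTE hjt) mulr0.
rewrite /x eqxx ht eqxx !Aii.
have e : (d t)%:Z * A t s = C by rewrite /C dsym.
rewrite -!mulrA.
have -> : forall y : int, (d t)%:Z * (A t s * y) = C * y by move=> y; rewrite -e mulrA.
rewrite /C => h.
have hds := dpos s; have hdt := dpos t.
have e2 : (d s)%:Z * A s t * ((d s)%:Z * A s t) = (d s)%:Z * (d t)%:Z * (A s t * A t s).
  by rewrite [X in _ * X]dsym; ring.
move: h.
have -> : forall D E a : int, - (D * a) * (D * (2 * - (D * a))) +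
    - (D * a) * (D * (a * (2 * D))) +
    (2 * (D * (D * a * - (D * a))) +
     2 * (D * (E * (2 * (2 * D))))) = 2 * D * (4 * D * E - (D * a) * (D * a)).
  by move=> D E a; ring.
rewrite e2 => h.
have hD : (0 : int) < (d s)%:Z by rewrite ltz_nat.
have hE : (0 : int) < (d t)%:Z by rewrite ltz_nat.
move: h hD hE; set D := (d s)%:Z; set E := (d t)%:Z; set P := A s t * A t s.
move=> h hD hE.
have h2 : 0 < D * E * (4 - P).
  have e3 : 2 * D * (4 * D * E - D * E * P) = (2 * D) * (D * E * (4 - P)) by ring.
  rewrite e3 pmulr_rgt0 // in h; rewrite mulr_gt0 //.
have : 0 < 4 - P by rewrite pmulr_rgt0 // in h2; rewrite mulr_gt0.
lia.
Qed.
Lemma ab_cases s t : s != t ->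
  let a := A s t in let b := A t s in
  (a = 0 /\ b = 0) \/ (a = -1 /\ b = -1) \/ (a = -1 /\ b = -2) \/ (a = -2 /\ b = -1)
   \/ (a = -1 /\ b = -3) \/ (a = -3 /\ b = -1).
Proof.
move=> hst a b.
have ha : a <= 0 by apply: Aoff.
have hb : b <= 0 by apply: Aoff; rewrite eq_sym.
have hab : (a == 0) = (b == 0) by apply: Azero.
have h := cartan_ab hst; rewrite -/a -/b in h.
have [a0|a0] := eqVneq a 0. move: hab; rewrite a0 eqxx => /esym/eqP; lia.
move: hab; rewrite (negbTE a0) => /esym/negbT b0.
have : b <= -1 by lia. have : a <= -1 by lia. move=> {ha hb a0 b0} h1 h2.
nia.
Qed.

Fixpoint gb (L : nat) : seq bool := if L is L'.+1 then (~~ odd L') :: gb L' else [::].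
Definition sel (x y : 'I_l) (b : bool) := if b then x else y.
Definition galt x y L := map (sel x y) (gb L).

Lemma size_gb L : size (gb L) = L.
Proof. by elim: L => //= L ->. Qed.
Lemma size_galt x y L : size (galt x y L) = L.
Proof. by rewrite size_map size_gb. Qed.

Lemma gb_rcons L : gb L.+1 = rcons (map negb (gb L)) true.
Proof.
elim: L => [|L IH] //.
transitivity ((~~ odd L.+1) :: gb L.+1); first by [].
by rewrite {1}IH /= negbK.
Qed.

Lemma sel_neg x y : sel x y \o negb =1 sel y x.
Proof. by case. Qed.

Lemma galt_rcons x y L : galt x y L.+1 = rcons (galt y x L) x.
Proof.
by rewrite /galt gb_rcons map_rcons -map_comp (eq_map (sel_neg x y)).
Qed.

Lemma gb_split k j : exists p, gb (k + j) = p ++ gb j.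
Proof.
elim: k => [|k [p IH]]; first by exists [::].
by exists ((~~ odd (k + j)) :: p); rewrite addSn /= IH.
Qed.

Definition wstp (a b : int) (bb : bool) (st : int * int * int * int) :=
  let: (f1, f2, g1, g2) := st in
  if bb then (1 - f1 - a * g1, - f2 - a * g2, g1, g2)
  else (f1, f2, - b * f1 - g1, 1 - b * f2 - g2).
Definition wst a b bs := foldr (wstp a b) (0, 0, 0, 0) bs.

Lemma weyl_state s t bs lam k : weyl_act A (map (sel s t) bs) lam k =
  let: (f1, f2, g1, g2) := wst (A s t) (A t s) bs in
  lam k - A k s * (f1 * lam s + f2 * lam t) - A k t * (g1 * lam s + g2 * lam t).
Proof.
elim: bs k => [|bb bs IH] k /=; first by ring.
rewrite /sref; case: bb; rewrite /sel /= !IH;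
case: (wst (A s t) (A t s) bs) => [[[f1 f2] g1] g2] /=; rewrite !Aii; ring.
Qed.

Lemma weq_state s t bs1 bs2 : wst (A s t) (A t s) bs1 = wst (A s t) (A t s) bs2 ->
  weq A (map (sel s t) bs1) (map (sel s t) bs2).
Proof. move=> h lam; apply: funext => k; by rewrite !weyl_state h. Qed.

Definition sup (s t : 'I_l) (p q : int) : 'I_l -> int :=
  fun k => (if k == s then p else 0) + (if k == t then q else 0).
Definition rstp (a b : int) (bb : bool) (pq : int * int) :=
  let: (p, q) := pq in if bb then (- p - a * q, q) else (p, - q - b * p).
Definition rst a b bs := foldr (rstp a b) (1, 0) bs.

Lemma ract_state s t bs : s != t ->
  ract (map (sel s t) bs) (sup s t 1 0) =
  let: (p, q) := rst (A s t) (A t s) bs in sup s t p q.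
Proof.
move=> hst; elim: bs => [|bb bs IH] //=; rewrite IH.
case: (rst (A s t) (A t s) bs) => p q /=.
have ht : (t == s) = false by rewrite eq_sym; exact: negbTE.
have hS : forall j, \sum_m A j m * sup s t p q m = A j s * p + A j t * q.
  move=> j; rewrite (sum2 hst) /sup ?eqxx ?ht ?(negbTE hst); first ring.
  by move=> i /negbTE -> /negbTE ->; rewrite addr0 mulr0.
apply: funext => k; rewrite /rref /sel; case: bb => /=; rewrite hS !Aii /sup;
by case: (k == s); case: (k == t); ring.
Qed.

Definition good (a b : int) (m : nat) :=
  (wst a b (gb m) == wst a b (map negb (gb m))) &&
  all (fun L => let: (p, q) := rst a b (map negb (gb L)) in (0 <= p) && (0 <= q))
      (iota 0 m).

Lemma red_nodup x y z : ~ red A (x ++ [:: y; y] ++ z).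
Proof.
move=> h; have := h (x ++ z).
have e : weq A (x ++ z) (x ++ [:: y; y] ++ z).
  move=> lam; rewrite !weyl_cat /=; by rewrite sref_inv.
move/(_ e); rewrite !size_cat /=; lia.
Qed.

Lemma alt_char s t x : s != t -> all (fun a => (a == s) || (a == t)) x ->
  red A x -> last s x = s -> x = galt s t (size x).
Proof.
move=> hst; elim: x => [|a x IH] //= /andP [ha hx] hr hl.
case: x IH hx hr hl => [|b x] IH hx hr hl.
  by move: hl => /= ->.
have hr' : red A (b :: x) by apply: (red_suffix (w1 := [:: a])).
have := IH hx hr' hl => /= e0.
have e : b :: x = sel s t (~~ odd (size x)) :: galt s t (size x) by rewrite e0.
rewrite e /galt /=.
have hab : a != sel s t (~~ odd (size x)).
  apply/negP => /eqP hab; move: hr; rewrite e -hab => hr.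
  by apply: (red_nodup (x := [::]) hr).
congr (_ :: _).
move: hab; rewrite /sel; case: (odd (size x)) => /=;
by case/orP: ha => /eqP -> //; rewrite eqxx.
Qed.

Lemma dihedral_gen s t u m : s != t -> good (A s t) (A t s) m -> (0 < m)%N ->
  all (fun x => (x == s) || (x == t)) u -> red A (u ++ [:: s]) ->
  exists p q, 0 <= p /\ 0 <= q /\ ract u (evec s) = sup s t p q.
Proof.
move=> hst /andP [/eqP hbr hpos] hm hu hr.
have hall : all (fun a => (a == s) || (a == t)) (u ++ [:: s]) by rewrite all_cat hu /= eqxx.
have hl : last s (u ++ [:: s]) = s by rewrite last_cat.
have e := alt_char hst hall hr hl.
rewrite size_cat /= addn1 galt_rcons -cats1 in e.
have eu : u = galt t s (size u) by move/eqP: e; rewrite eqseq_cat ?size_galt // => /andP [/eqP].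
have hL : (size u < m)%N.
  rewrite ltnNge; apply/negP => hmu.
  have [p hp] := gb_split ((size u).+1 - m.+1) m.+1.
  rewrite subnK // in hp.
  move: hr; rewrite e cats1 -galt_rcons /galt hp map_cat.
  case: m hbr hpos hm hmu hp => // m' hbr hpos _ hmu hp.
  set c := sel s t (odd m').
  set P := map (sel s t) p.
  set Q := map (sel t s) (gb m').
  have e1 : map (sel s t) (gb m'.+2) = c :: map (sel s t) (gb m'.+1).
    by rewrite /c /= negbK.
  have e2 : map (sel s t) [seq ~~ i | i <- gb m'.+1] = c :: Q.
    by rewrite /c /Q /= negbK -map_comp (eq_map (sel_neg s t)).
  have E : weq A (P ++ Q) (P ++ c :: map (sel s t) (gb m'.+1)).
    apply: weq_catl.
    apply: (weq_trans (v := [:: c; c] ++ Q)).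
      by move=> lam; rewrite weyl_cat /= sref_inv.
    apply: (weq_catl [:: c]); rewrite -e2; apply: weq_sym; exact: weq_state.
  rewrite e1 => hr.
  have := hr _ E; rewrite /P /Q !size_cat /= !size_map !size_gb; lia.
rewrite eu.
have hL' : (size u \in iota 0 m) by rewrite mem_iota.
have := allP hpos _ hL'.
have -> : galt t s (size u) = map (sel s t) (map negb (gb (size u))).
  by rewrite /galt -map_comp; apply: eq_map; case.
have -> : evec s = sup s t 1 0.
  apply: funext => k; rewrite /evec /sup; case: (eqVneq k s) => [->|hks].
    by rewrite (negbTE hst) addr0.
  case: (k == t); by rewrite ?addr0 ?add0r.
rewrite ract_state //.
case: (rst (A s t) (A t s) [seq ~~ i | i <- gb (size u)]) => p q /andP [hp hq].
by exists p, q.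
Qed.

Lemma dihedral s t u : s != t ->
  all (fun x => (x == s) || (x == t)) u -> red A (u ++ [:: s]) ->
  exists p q, 0 <= p /\ 0 <= q /\ ract u (evec s) = sup s t p q.
Proof.
move=> hst hu hr.
have key : forall m, good (A s t) (A t s) m -> (0 < m)%N ->
   exists p q, 0 <= p /\ 0 <= q /\ ract u (evec s) = sup s t p q.
  by move=> m g hm; exact: (dihedral_gen hst g hm hu hr).
have := ab_cases hst => /=.
case=> [[ha hb]|[[ha hb]|[[ha hb]|[[ha hb]|[[ha hb]|[ha hb]]]]]].
- by apply: (key 2); rewrite ?ha ?hb; vm_compute.
- by apply: (key 3); rewrite ?ha ?hb; vm_compute.
- by apply: (key 4); rewrite ?ha ?hb; vm_compute.
- by apply: (key 4); rewrite ?ha ?hb; vm_compute.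
- by apply: (key 6); rewrite ?ha ?hb; vm_compute.
- by apply: (key 6); rewrite ?ha ?hb; vm_compute.
Qed.
Lemma evec_sup s t p q : sup s t p q = fun k => p * evec s k + q * evec t k.
Proof.
apply: funext => k; rewrite /sup /evec.
by case: (k == s); case: (k == t); ring.
Qed.

Lemma humph N : forall w s, size w = N -> red A (w ++ [:: s]) ->
  forall k, 0 <= ract w (evec s) k.
Proof.
elim/ltn_ind: N => N IH w s.
case/lastP: w => [|w' t] hN hr.
  by move=> k; rewrite /= /evec; case: ifP.
set w := rcons w' t.
have hw : red A w by apply: (red_prefix hr).
have hts : t != s.
  apply/negP => /eqP ets; move: hr; rewrite /w ets -cats1 -catA /=.
  by rewrite -[[:: s; s]]cats0 => hr; apply: (red_nodup hr).
have hst : s != t by rewrite eq_sym.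
pose cand v u := [/\ all (fun x => (x == s) || (x == t)) u, weq A (v ++ u) w &
                     (size v + size u = size w)%N].
pose P n := `[< exists v u, cand v u /\ size v = n >].
have exP : exists n, P n.
  exists (size w'); apply/asboolP; exists w', [:: t]; split => //; split.
  - by rewrite /= eqxx orbT.
  - by rewrite cats1.
  - by rewrite /w size_rcons addn1.
case: (ex_minnP exP) => n0 /asboolP [v [u [[hu hvu hsz] hn0]]] hmin.
have hn0w : (n0 <= size w')%N.
  apply: hmin; apply/asboolP; exists w', [:: t]; split => //; split.
  - by rewrite /= eqxx orbT.
  - by rewrite cats1.
  - by rewrite /w size_rcons addn1.
have hvred : red A v.
  move=> v' hv'; have := hw (v' ++ u) (weq_trans (weq_catr u hv') hvu).
  by rewrite size_cat -hsz leq_add2r.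
have hured : red A u.
  move=> u' hu'; have := hw (v ++ u') (weq_trans (weq_catl v hu') hvu).
  by rewrite size_cat -hsz leq_add2l.
have hstep : forall x, (x == s) || (x == t) -> red A (v ++ [:: x]).
  move=> x hx; apply: contrapT => hnr.
  have [v' [hv' hsv']] := red_step hvred hnr.
  have : P (size v').
    apply/asboolP; exists v', (x :: u); split => //; split.
    - by rewrite /= hx hu.
    - apply: (weq_trans _ hvu).
      have -> : v' ++ x :: u = (v' ++ [:: x]) ++ u by rewrite -catA.
      apply: (weq_trans (weq_catr u (weq_catr [:: x] hv'))).
      rewrite -!catA /=; apply: weq_catl => lam; by rewrite /= sref_inv.
    - by rewrite /= -hsz -hsv' addnS addn1 addSn.
  by move/hmin; rewrite -hn0 -hsv' addn1 ltnn.
have hvs := hstep s (introT orP (or_introl (eqxx s))).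
have hvt := hstep t (introT orP (or_intror (eqxx t))).
have hNw : size w = N by [].
have hlt : (size v < N)%N by rewrite hn0 -hNw /w size_rcons; lia.
have IHs := IH _ hlt v s erefl hvs.
have IHt := IH _ hlt v t erefl hvt.
have hus : red A (u ++ [:: s]).
  apply: contrapT => /not_red [u'' [hu'' hsu'']].
  have := hr (v ++ u'').
  have e : weq A (v ++ u'') (w ++ [:: s]).
    apply: (weq_trans (weq_catl v hu'')); rewrite catA; exact: weq_catr.
  move/(_ e); rewrite !size_cat /= -/w -hsz; rewrite size_cat /= addn1 ltnS in hsu''.
  move=> h; have := leq_trans h (leq_add (leqnn (size v)) hsu''); by rewrite addn1 ltnn.
have [p [q [hp [hq he]]]] := dihedral hst hu hus.
have -> : ract w (evec s) = ract (v ++ u) (evec s) by rewrite (weq_ract hvu).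
rewrite ract_cat he evec_sup ract_lin => k.
by apply: addr_ge0; apply: mulr_ge0.
Qed.

Lemma key_pos i t : red A (i :: t) -> forall k, 0 <= ract (rev t) (evec i) k.
Proof.
move=> h; apply: (humph (N := size (rev t))) => //.
by rewrite cats1 -rev_cons; apply: red_rev.
Qed.

Lemma key_nz i t : exists k, ract (rev t) (evec i) k != 0.
Proof.
apply: contrapT => h.
have e : ract (rev t) (evec i) = fun _ => 0.
  apply: funext => k; apply: contrapT => hk; apply: h; exists k; exact/eqP.
have := ract_rev' t (evec i); rewrite e ract0 => /(congr1 (fun f => f i)).
by rewrite /evec eqxx.
Qed.

Lemma pair_evec mu i : pair mu (evec i) = (d i)%:Z * mu i.
Proof.
rewrite /pair (bigD1 i) //= /evec eqxx big1 ?addr0; first ring.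
by move=> k /negbTE ->; rewrite !mul0r.
Qed.

Lemma a_nonneg i t lam : red A (i :: t) -> (forall k, 0 <= lam k) ->
  0 <= weyl_act A t lam i.
Proof.
move=> hr hl.
have e : (d i)%:Z * weyl_act A t lam i = pair lam (ract (rev t) (evec i)).
  by rewrite -pair_evec -[in RHS](pair_inv t) ract_rev'.
have h : 0 <= (d i)%:Z * weyl_act A t lam i.
  rewrite e /pair; apply: sumr_ge0 => k _; apply: mulr_ge0 => //.
  by apply: mulr_ge0; [apply: key_pos|].
have hd : (0 : int) < (d i)%:Z by rewrite ltz_nat.
by rewrite pmulr_rge0 in h.
Qed.

Lemma Ac_evec i : Ac (evec i) = fun k => A k i.
Proof.
apply: funext => k; rewrite /Ac (bigD1 i) //= /evec eqxx big1 ?addr0 ?mulr1 //.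
by move=> m /negbTE ->; rewrite mulr0.
Qed.

Lemma weyl_lin u (lam mu : 'I_l -> int) :
  weyl_act A u (fun k => lam k + mu k) = fun k => weyl_act A u lam k + weyl_act A u mu k.
Proof.
elim: u => [|j u IH] //=; rewrite IH; apply: funext => k; rewrite /sref; ring.
Qed.
End Roots.
Section Ite.
Variables (F : numFieldType) (n : nat).
Definition ite (K : nat) (X : 'M[F]_n) (u : 'cV[F]_n) := iter K (mulmx X) u.

Lemma ite0 K X : ite K X 0 = 0.
Proof. by elim: K => //= K IH; rewrite /ite /= -/(ite K X 0) IH mulmx0. Qed.
Lemma iteD K X u v : ite K X (u + v) = ite K X u + ite K X v.
Proof. elim: K => //= K IH; by rewrite /ite /= -!/(ite K X _) IH mulmxDr. Qed.
Lemma iteZ K X a u : ite K X (a *: u) = a *: ite K X u.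
Proof. elim: K => //= K IH; by rewrite /ite /= -!/(ite K X _) IH -scalemxAr. Qed.
Lemma iteB K X u v : ite K X (u - v) = ite K X u - ite K X v.
Proof. by rewrite -scaleN1r iteD iteZ scaleN1r. Qed.
Lemma iteSr K X u : ite K.+1 X u = ite K X (X *m u).
Proof. by rewrite /ite iterSr. Qed.
Lemma iteS K X u : ite K.+1 X u = X *m ite K X u.
Proof. by []. Qed.

End Ite.
Section SL2.
Variables (F : numFieldType) (n : nat) (e f H : 'M[F]_n) (c : F).
Hypothesis hef : e *m f = f *m e + H.
Hypothesis hHe : H *m e = e *m H + (2 * c) *: e.
Hypothesis hHf : H *m f = f *m H - (2 * c) *: f.
Hypothesis hc : c != 0.

Lemma sl2_L1 m u j : H *m u = (c * m) *: u ->
  H *m ite j f u = (c * (m - 2 * j%:R)) *: ite j f u.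
Proof.
move=> hu; elim: j => [|j IH]; first by rewrite mulr0 subr0.
rewrite iteS mulmxA hHf mulmxBl -mulmxA IH -scalemxAr -scalemxAl -scalerBl.
congr (_ *: _); rewrite !mulrSr; ring.
Qed.

Lemma sl2_L2 m u j : H *m u = (c * m) *: u ->
  e *m ite j.+1 f u = ite j.+1 f (e *m u) + (j.+1%:R * c * (m - j%:R)) *: ite j f u.
Proof.
move=> hu; elim: j => [|j IH].
  by rewrite /= /ite /= mulmxA hef mulmxDl -mulmxA hu mul1r subr0.
rewrite iteS mulmxA hef mulmxDl -mulmxA IH mulmxDr -scalemxAr.
rewrite (@sl2_L1 m u j.+1 hu) -(iteS j.+1 f (e *m u)) -(iteS j f u) -addrA.
congr (_ + _); rewrite -scalerDl; congr (_ *: _).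
rewrite !mulrSr; ring.
Qed.

Lemma sl2_S1 K m u : H *m u = (c * m%:R) *: u -> ite K e u = 0 -> ite m f u = 0 -> u = 0.
Proof.
elim: K m u => [|K IH] m u hu hK hf; first by [].
have heu : H *m (e *m u) = (c * (m.+2)%:R) *: (e *m u).
  rewrite mulmxA hHe mulmxDl -mulmxA hu -scalemxAr -scalemxAl -scalerDl.
  congr (_ *: _); rewrite !mulrSr; ring.
have hf2 : ite m.+2 f (e *m u) = 0.
  have := @sl2_L2 m%:R u m hu; rewrite iteS hf mulmx0 subrr mulr0 scale0r addr0 mulmx0.
  by move=> /esym h0; rewrite iteS h0 mulmx0.
have he : e *m u = 0 by apply: (IH m.+2) => //; rewrite -iteSr.
suff : forall j, (j <= m)%N -> ite j f u = 0 -> u = 0 by move/(_ m (leqnn m)); apply.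
elim=> [|j IHj] hj hfj; first by [].
apply: IHj; first exact: ltnW.
have := @sl2_L2 m%:R u j hu; rewrite hfj he ite0 mulmx0 add0r => /esym/eqP.
rewrite scaler_eq0 => /orP [|/eqP //].
rewrite -natrB; last exact: ltnW.
rewrite !mulf_eq0 pnatr_eq0 (negbTE hc) /= pnatr_eq0 subn_eq0.
by rewrite leqNgt hj.
Qed.

Lemma sl2_L4 m u j : e *m u = 0 -> H *m u = (c * m) *: u ->
  ite j e (ite j f u) = (\prod_(a < j) (a.+1%:R * c * (m - a%:R))) *: u.
Proof.
move=> he hu; elim: j => [|j IH]; first by rewrite big_ord0 scale1r.
rewrite iteSr (@sl2_L2 m u j hu) he ite0 add0r iteZ IH scalerA big_ord_recr /=.
by rewrite mulrC.
Qed.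
End SL2.
Section Rep.
Variables (F : numFieldType) (l n : nat) (A : 'I_l -> 'I_l -> int) (d : 'I_l -> nat).
Variables (xp xm h : 'I_l -> nat -> 'M[F]_n).
Hypothesis Aii : forall i, A i i = 2.
Hypothesis dpos : forall i, (0 < d i)%N.
Hypothesis hY : yangian_rep A d xp xm h.

Local Notation cV := 'cV[F]_n.

Lemma rel_hh i j r s : h i r *m h j s = h j s *m h i r.
Proof.
case: hY => [[H1 _] _ _ _ _]; have := H1 i j r s; rewrite /comm => /eqP.
by rewrite subr_eq0 => /eqP.
Qed.

Lemma rel_hxp i j s : h i 0 *m xp j s = xp j s *m h i 0 + da F A d i j *: xp j s.
Proof.
case: hY => [[_ H2] _ _ _ _]; have [e _] := H2 i j s; move: e; rewrite /comm => e.
by rewrite -[h i 0 *m xp j s](subrK (xp j s *m h i 0)) e addrC.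
Qed.

Lemma rel_hxm i j s : h i 0 *m xm j s = xm j s *m h i 0 - da F A d i j *: xm j s.
Proof.
case: hY => [[_ H2] _ _ _ _]; have [_ e] := H2 i j s; move: e; rewrite /comm => e.
by rewrite -[h i 0 *m xm j s](subrK (xm j s *m h i 0)) e addrC.
Qed.

Lemma rel_xpxm i j r s : xp i r *m xm j s = xm j s *m xp i r + (if i == j then h i (r + s)%N else 0).
Proof.
case: hY => [_ H3 _ _ _]; have := H3 i j r s; rewrite /comm => e.
by rewrite -[xp i r *m xm j s](subrK (xm j s *m xp i r)) e addrC.
Qed.

Lemma rel_hxm_rec i j r s : h i r.+1 *m xm j s =
  xm j s *m h i r.+1 + (h i r *m xm j s.+1 - xm j s.+1 *m h i r)
  - (da F A d i j / 2) *: (h i r *m xm j s + xm j s *m h i r).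
Proof.
case: hY => [_ _ H4 _ _]; have [_ e] := H4 i j r s; move: e; rewrite /comm /acomm.
move=> e.
rewrite -[h i r.+1 *m xm j s](subrK (xm j s *m h i r.+1)).
rewrite -[_ - xm j s *m h i r.+1](subrK (h i r *m xm j s.+1 - xm j s.+1 *m h i r)) e.
have H : forall a b c : 'M[F]_n, - c + b + a = a + b - c.
  by move=> a b c; rewrite -addrA addrC (addrC b).
exact: H.
Qed.

Definition dF (i : 'I_l) : F := (d i)%:R.

Lemma dF_neq0 i : dF i != 0.
Proof. by rewrite /dF pnatr_eq0 -lt0n dpos. Qed.

Lemma da_ii i : da F A d i i = 2 * dF i.
Proof. by rewrite /da Aii /dF rmorphM /= mulrC. Qed.

Definition Wt (mu : 'I_l -> int) (u : cV) :=
  forall i, h i 0 *m u = ((d i)%:Z * mu i)%:~R *: u.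

Lemma Wt0 mu : Wt mu 0.
Proof. by move=> i; rewrite mulmx0 scaler0. Qed.
Lemma WtD mu u v : Wt mu u -> Wt mu v -> Wt mu (u + v).
Proof. by move=> hu hv i; rewrite mulmxDr hu hv scalerDr. Qed.
Lemma WtZ mu a u : Wt mu u -> Wt mu (a *: u).
Proof. by move=> hu i; rewrite -scalemxAr hu !scalerA mulrC. Qed.

Lemma Wt_xm mu u j s : Wt mu u -> Wt (fun k => mu k - A k j) (xm j s *m u).
Proof.
move=> hu i; rewrite mulmxA rel_hxm mulmxBl -mulmxA hu -scalemxAl -scalemxAr.
rewrite -scalerBl /da -rmorphB /=; congr (_%:~R *: _); ring.
Qed.

Lemma Wt_xp mu u j s : Wt mu u -> Wt (fun k => mu k + A k j) (xp j s *m u).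
Proof.
move=> hu i; rewrite mulmxA rel_hxp mulmxDl -mulmxA hu -scalemxAl -scalemxAr.
rewrite -scalerDl /da -rmorphD /=; congr (_%:~R *: _); ring.
Qed.

Lemma Wt_h mu u j r : Wt mu u -> Wt mu (h j r *m u).
Proof. by move=> hu i; rewrite mulmxA rel_hh -mulmxA hu -scalemxAr. Qed.

Lemma Wt_ext mu nu u : (forall k, mu k = nu k) -> Wt mu u -> Wt nu u.
Proof. by move=> e hu i; rewrite -e. Qed.

Lemma Wt_ite_xm mu u j s m : Wt mu u ->
  Wt (fun k => mu k - m%:Z * A k j) (ite m (xm j s) u).
Proof.
elim: m => [|m IH] hu; first by apply: (Wt_ext _ hu) => k; rewrite mul0r subr0.
rewrite iteS; apply: (Wt_ext _ (Wt_xm _ _ (IH hu))) => k.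
rewrite -addn1 PoszD; ring.
Qed.

Lemma Wt_ite_xp mu u j s m : Wt mu u ->
  Wt (fun k => mu k + m%:Z * A k j) (ite m (xp j s) u).
Proof.
elim: m => [|m IH] hu; first by apply: (Wt_ext _ hu) => k; rewrite mul0r addr0.
rewrite iteS; apply: (Wt_ext _ (Wt_xp _ _ (IH hu))) => k.
rewrite -addn1 PoszD; ring.
Qed.
Inductive Gen (v : cV) : cV -> Prop :=
| Gen0 : Gen v 0
| GenD u1 u2 : Gen v u1 -> Gen v u2 -> Gen v (u1 + u2)
| GenZ a u : Gen v u -> Gen v (a *: u)
| Genv : Gen v v
| GenX j s u : Gen v u -> Gen v (xm j s *m u).

Lemma GenB v u1 u2 : Gen v u1 -> Gen v u2 -> Gen v (u1 - u2).
Proof. move=> h1 h2; rewrite -scaleN1r; apply: GenD => //; exact: GenZ. Qed.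

Lemma Gen_h v : (forall i r, exists c, h i r *m v = c *: v) ->
  forall u, Gen v u -> forall i r, Gen v (h i r *m u).
Proof.
move=> hv u; elim=> {u}.
- by move=> i r; rewrite mulmx0; exact: Gen0.
- by move=> u1 u2 _ IH1 _ IH2 i r; rewrite mulmxDr; apply: GenD.
- by move=> a u _ IH i r; rewrite -scalemxAr; apply: GenZ.
- by move=> i r; have [c ->] := hv i r; apply: GenZ; exact: Genv.
move=> j s u hu IH i r.
suff : forall s, Gen v (h i r *m (xm j s *m u)) by apply.
elim: r => [|r IHr] s'.
  rewrite mulmxA rel_hxm mulmxBl -mulmxA -scalemxAl.
  by apply: GenB; [apply: GenX; apply: IH| apply: GenZ; apply: GenX].
rewrite mulmxA rel_hxm_rec !mulmxBl !mulmxDl -!scalemxAl !mulmxDl -!mulmxA.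
apply: GenB; last by apply: GenZ; apply: GenD => //; apply: GenX; apply: IH.
rewrite mulNmx -mulmxA.
apply: GenD; first by apply: GenX; apply: IH.
apply: GenD => //; rewrite -scaleN1r; apply: GenZ; apply: GenX; apply: IH.
Qed.

Lemma Gen_xp v : (forall i r, exists c, h i r *m v = c *: v) ->
  (forall i r, xp i r *m v = 0) ->
  forall u, Gen v u -> forall i r, Gen v (xp i r *m u).
Proof.
move=> hv hp u; elim=> {u}.
- by move=> i r; rewrite mulmx0; exact: Gen0.
- by move=> u1 u2 _ IH1 _ IH2 i r; rewrite mulmxDr; apply: GenD.
- by move=> a u _ IH i r; rewrite -scalemxAr; apply: GenZ.
- by move=> i r; rewrite hp; exact: Gen0.
move=> j s u hu IH i r.
rewrite mulmxA rel_xpxm mulmxDl -mulmxA; apply: GenD; first by apply: GenX.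
case: (i == j); last by rewrite mul0mx; exact: Gen0.
exact: Gen_h.
Qed.

Lemma Gen_all v : irreducible_rep xp xm h -> v != 0 ->
  (forall i r, exists c, h i r *m v = c *: v) ->
  (forall i r, xp i r *m v = 0) -> forall u, Gen v u.
Proof.
move=> [_ hirr] hv0 hv hp.
have hsub : is_submodule xp xm h (Gen v).
  split.
  - exact: Gen0.
  - exact: GenD.
  - exact: GenZ.
  - move=> i r u hu; split; [exact: Gen_xp | exact: GenX | exact: Gen_h].
case: (hirr _ hsub) => // h0.
by move: hv0; rewrite (h0 v (Genv v)) eqxx.
Qed.

Fixpoint AllP {T} (P : T -> Prop) (s : seq T) : Prop :=
  if s is x :: s' then P x /\ AllP P s' else True.

Lemma AllP_cat T (P : T -> Prop) s1 s2 : AllP P s1 -> AllP P s2 -> AllP P (s1 ++ s2).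
Proof. by elim: s1 => //= x s1 IH [hx h1] h2; split => //; apply: IH. Qed.

Lemma AllP_map T U (f : T -> U) (P : U -> Prop) (Q : T -> Prop) s :
  (forall x, Q x -> P (f x)) -> AllP Q s -> AllP P (map f s).
Proof. by move=> hf; elim: s => //= x s IH [hx hs]; split; [apply: hf | apply: IH]. Qed.

Variable lam : 'I_l -> int.

Definition wtn (ns : 'I_l -> nat) : 'I_l -> int :=
  fun k => lam k - \sum_m A k m * (ns m)%:Z.

Definition WD (v u : cV) := exists c ps, u = c *: v + \sum_(p <- ps) p.2 /\
  AllP (fun p : ('I_l -> nat) * cV => (exists k, p.1 k != 0%N) /\ Wt (wtn p.1) p.2) ps.

Lemma Gen_WD v : Wt lam v -> forall u, Gen v u -> WD v u.
Proof.
move=> hv u; elim=> {u}.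
- by exists 0, [::]; rewrite big_nil scale0r addr0.
- move=> u1 u2 _ [c1 [ps1 [e1 h1]]] _ [c2 [ps2 [e2 h2]]].
  exists (c1 + c2), (ps1 ++ ps2); split; last exact: AllP_cat.
  rewrite e1 e2 big_cat /= scalerDl.
  by rewrite -!addrA; congr (_ + _); rewrite addrCA.
- move=> a u _ [c [ps [e hp]]].
  exists (a * c), (map (fun p => (p.1, a *: p.2)) ps); split.
    by rewrite e big_map scalerDr scalerA scaler_sumr.
  by apply: (AllP_map _ hp) => p [hk hw]; split => //; apply: WtZ.
- by exists 1, [::]; rewrite big_nil scale1r addr0.
move=> j s u _ [c [ps [e hp]]].
pose ej : 'I_l -> nat := fun m => (m == j) : nat.
exists 0, ((ej, c *: (xm j s *m v)) :: map (fun p => (fun m => (p.1 m + ej m)%N, xm j s *m p.2)) ps).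
split.
  rewrite e big_cons big_map scale0r add0r mulmxDr -scalemxAr /=; congr (_ + _).
  by rewrite mulmx_sumr.
have hsj : forall (ns : 'I_l -> nat) k,
    \sum_m A k m * (ns m + ej m)%N%:Z = \sum_m A k m * (ns m)%:Z + A k j.
  move=> ns k; rewrite (bigD1 j) //= [in RHS](bigD1 j) //= /ej eqxx.
  change (nat_of_bool true) with 1%N; rewrite PoszD.
  rewrite (eq_bigr (fun m => A k m * (ns m)%:Z)); last first.
    by move=> m /negbTE hm; rewrite hm addn0.
  ring.
split.
  split; first by exists j; rewrite /= /ej eqxx.
  apply: WtZ; apply: (Wt_ext _ (Wt_xm _ s hv)) => k.
  rewrite /wtn (bigD1 j) //= /ej eqxx big1 ?addr0 ?mulr1 //.
  by move=> m /negbTE ->; rewrite mulr0.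
apply: (AllP_map _ hp) => p [[k hk] hw]; split.
  by exists k; move: hk; rewrite addn_eq0 negb_and => ->.
apply: (Wt_ext _ (Wt_xm _ s hw)) => k'.
rewrite /wtn /= hsj; ring.
Qed.
Lemma cst_neq0 i (a b : int) : a != b -> (((d i)%:Z * a)%:~R - ((d i)%:Z * b)%:~R : F) != 0.
Proof.
move=> hab; rewrite -rmorphB /= -mulrBr intr_eq0 mulf_neq0 //.
  by rewrite -lt0n dpos.
by rewrite subr_eq0.
Qed.

Lemma proj nu u ps : Wt nu u ->
  AllP (fun p : ('I_l -> int) * cV => Wt p.1 p.2 /\ exists i, p.1 i != nu i) ps ->
  u = \sum_(p <- ps) p.2 -> u = 0.
Proof.
have [k] := ubnP (size ps); elim: k ps u => // k IH0 [|p ps] u hsz hu hps e.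
  by rewrite e big_nil.
have IH : forall u ps', size ps' = size ps -> Wt nu u ->
  AllP (fun p : ('I_l -> int) * cV => Wt p.1 p.2 /\ exists i, p.1 i != nu i) ps' ->
  u = \sum_(p <- ps') p.2 -> u = 0.
  by move=> u' ps' hs; apply: IH0; rewrite hs.
case: hps => [[hp1 [i hi]] hps].
pose cp : F := ((d i)%:Z * p.1 i)%:~R.
pose T := fun w : cV => h i 0 *m w - cp *: w.
have hTu : T u = (((d i)%:Z * nu i)%:~R - cp) *: u by rewrite /T hu scalerBl.
have hTp : T p.2 = 0 by rewrite /T hp1 subrr.
have hu' : Wt nu (T u) by rewrite hTu; apply: WtZ.
have hall : AllP (fun p : ('I_l -> int) * cV => Wt p.1 p.2 /\ exists i, p.1 i != nu i)
   (map (fun q : ('I_l -> int) * cV => (q.1, T q.2)) ps).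
  apply: (AllP_map _ hps) => q [hq hne]; split => //=; rewrite /T.
  by apply: WtD; [apply: Wt_h | rewrite -scaleN1r; apply: WtZ; apply: WtZ].
have H : T u = 0.
  apply: (IH (T u) (map (fun q : ('I_l -> int) * cV => (q.1, T q.2)) ps) (size_map _ _) hu' hall).
  rewrite big_map.
  have -> : T u = T p.2 + \sum_(q <- ps) T q.2.
    by rewrite /T e big_cons mulmxDr scalerDr mulmx_sumr scaler_sumr sumrB opprD addrACA.
  by rewrite hTp add0r. move: hTu; rewrite H => /esym/eqP; rewrite scaler_eq0 => /orP [|/eqP //].
by rewrite /cp (negbTE (cst_neq0 _ _)) // eq_sym.
Qed.
Hypothesis Ainj : forall c : 'I_l -> int, (forall k, \sum_m A k m * c m = 0) -> forall k, c k = 0.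

Lemma notall_ex (f g : 'I_l -> int) : ~ (forall k, f k = g k) -> exists k, f k != g k.
Proof.
move=> H; apply: contrapT => H1; apply: H => k; apply/eqP; apply: contrapT => H2.
by apply: H1; exists k; apply/negP.
Qed.

Lemma wt_bound v : Wt lam v -> (forall u, Gen v u) ->
  forall nu u, Wt nu u -> u != 0 -> exists ns, forall k, nu k = wtn ns k.
Proof.
move=> hv hG nu u hu hu0; apply: contrapT => hno.
have [c [ps [e hall]]] := Gen_WD hv (hG u).
move/eqP: hu0; apply; apply: (proj (nu := nu)
   (ps := (lam, c *: v) :: map (fun p : ('I_l -> nat) * cV => (wtn p.1, p.2)) ps)) => //.
- split.
    split; first exact: WtZ.
    have [k hk] : exists k, nu k != lam k.
      apply: notall_ex => H; apply: hno; exists (fun _ => 0%N) => k.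
      by rewrite H /wtn big1 ?subr0 // => m _; rewrite mulr0.
    by exists k; rewrite eq_sym.
  apply: (AllP_map _ hall) => p [_ hw]; split => //=.
  have [k hk] : exists k, nu k != wtn p.1 k.
    by apply: notall_ex => H; apply: hno; exists p.1.
  by exists k; rewrite eq_sym.
- by rewrite e big_cons big_map.
Qed.

Lemma wt_lam_space v : Wt lam v -> (forall u, Gen v u) ->
  forall u, Wt lam u -> exists c, u = c *: v.
Proof.
move=> hv hG u hu.
have [c [ps [e hall]]] := Gen_WD hv (hG u).
exists c; apply/eqP; rewrite -subr_eq0; apply/eqP.
apply: (proj (nu := lam) (ps := map (fun p : ('I_l -> nat) * cV => (wtn p.1, p.2)) ps)).
- by apply: WtD => //; rewrite -scaleN1r; apply: WtZ; apply: WtZ.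
- apply: (AllP_map _ hall) => p [[k hk] hw]; split => //=.
  apply: notall_ex => H.
  have E : forall k, (p.1 k)%:Z = 0.
    apply: Ainj => k'; move: (H k'); rewrite /wtn => /eqP.
    by rewrite subr_eq addrC -subr_eq subrr eq_sym => /eqP.
  by move: (E k) => [] hk0; rewrite hk0 in hk.
- by rewrite e addrC addKr big_map.
Qed.

Lemma dep_vecs (vs : 'I_n.+1 -> cV) :
  exists c : 'I_n.+1 -> F, (exists k, c k != 0) /\ \sum_k c k *: vs k = 0.
Proof.
pose M : 'M[F]_(n.+1, n) := \matrix_(k, j) vs k j 0.
pose K := kermx M.
have hK : K != 0.
  apply/negP => /eqP hK0.
  have := mxrank_ker M; rewrite -/K hK0 mxrank0.
  have := rank_leq_col M; lia.
have [k0 [j0 hkj]] : exists k0 j0, K k0 j0 != 0.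
  apply: contrapT => H; move/negP: hK; apply; apply/eqP/matrixP => a b.
  rewrite [RHS]mxE; apply: contrapT => hab; apply: H; exists a, b; exact/eqP.
exists (fun k => K k0 k); split; first by exists j0.
apply/matrixP => a b; rewrite ord1 summxE [RHS]mxE.
have E := congr1 (fun X : 'M[F]_(n.+1, n) => X k0 a) (mulmx_ker M).
rewrite /= [RHS]mxE mxE in E.
transitivity (\sum_j K k0 j * M j a); last exact: E.
by apply: eq_bigr => k _; rewrite !mxE.
Qed.

Lemma Wt_ite X (beta : 'I_l -> int) :
  (forall mu w, Wt mu w -> Wt (fun k => mu k + beta k) (X *m w)) ->
  forall mu u K, Wt mu u -> Wt (fun i => mu i + K%:Z * beta i) (ite K X u).
Proof.
move=> hX mu u; elim=> [|K IH] hu; first by apply: (Wt_ext _ hu) => i; rewrite mul0r addr0.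
rewrite iteS; apply: (Wt_ext _ (hX _ _ (IH hu))) => i.
rewrite -addn1 PoszD; ring.
Qed.

Lemma nilp X (beta : 'I_l -> int) : (exists i, beta i != 0) ->
  (forall mu w, Wt mu w -> Wt (fun k => mu k + beta k) (X *m w)) ->
  forall mu u, Wt mu u -> exists K, ite K X u = 0.
Proof.
move=> [i0 hb] hX mu u hu.
have [c [[k0 hk0] hs]] := dep_vecs (fun k => ite k X u).
exists k0.
pose wt (k : nat) := fun i => mu i + k%:Z * beta i.
have H : c k0 *: ite k0 X u = 0.
  apply: (@proj (wt k0) (c k0 *: ite k0 X u)
    [seq (wt (val k), - (c k *: ite k X u)) | k : 'I_n.+1 <- [seq k <- index_enum 'I_n.+1 | k != k0]]).
  - by apply: WtZ; apply: Wt_ite.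
  - have : forall k : 'I_n.+1, k != k0 -> (Wt (wt k) (- (c k *: ite k X u)) /\ exists i, wt k i != wt k0 i).
      move=> k hk; split.
        by rewrite -scaleN1r; apply: WtZ; apply: WtZ; apply: Wt_ite.
      exists i0; rewrite /wt; apply/negP => /eqP e.
      have : (k%:Z - k0%:Z) * beta i0 = 0 by rewrite mulrBl; apply/eqP; rewrite subr_eq0 -(inj_eq (addrI (mu i0))) e.
      move/eqP; rewrite mulf_eq0 (negbTE hb) orbF subr_eq0 => /eqP /(congr1 absz) /= e2.
      by move: hk; rewrite -(inj_eq val_inj) /= e2 eqxx.
    move=> hk; set s := index_enum _; elim: s => //= k s IH.
    by case: ifP => hk' //=; split => //; apply: hk.
  - rewrite big_map big_filter; apply/eqP; rewrite -subr_eq0 sumrN opprK.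
    by rewrite (bigD1 k0) //= in hs; rewrite hs.
by move/eqP: H; rewrite scaler_eq0 (negbTE hk0) /= => /eqP.
Qed.
Lemma rel_ef i : xp i 0 *m xm i 0 = xm i 0 *m xp i 0 + h i 0.
Proof. by rewrite rel_xpxm eqxx. Qed.
Lemma rel_He i : h i 0 *m xp i 0 = xp i 0 *m h i 0 + (2 * dF i) *: xp i 0.
Proof. by rewrite rel_hxp da_ii. Qed.
Lemma rel_Hf i : h i 0 *m xm i 0 = xm i 0 *m h i 0 - (2 * dF i) *: xm i 0.
Proof. by rewrite rel_hxm da_ii. Qed.

Lemma Wt_H mu u i : Wt mu u -> h i 0 *m u = (dF i * (mu i)%:~R) *: u.
Proof. by move=> hu; rewrite hu rmorphM. Qed.

Lemma S1Y i mu u m : Wt mu u -> mu i = m%:Z -> ite m (xm i 0) u = 0 -> u = 0.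
Proof.
move=> hu hm hf.
have hb : exists k, A k i != 0 by exists i; rewrite Aii.
have [K hK] := @nilp (xp i 0) (fun k => A k i) hb
   (fun mu w hw => Wt_xp i 0 hw) mu u hu.
apply: (sl2_S1 (rel_ef i) (rel_He i) (rel_Hf i) (dF_neq0 i) (K := K) (m := m)) => //.
by rewrite (Wt_H i hu) hm.
Qed.

Lemma S2Y i mu u m : Wt mu u -> mu i = - m%:Z -> ite m (xp i 0) u = 0 -> u = 0.
Proof.
move=> hu hm hf.
have hb : exists k, - A k i != 0 by exists i; rewrite Aii.
have hX : forall mu w, Wt mu w -> Wt (fun k => mu k + - A k i) (xm i 0 *m w).
  by move=> mu' w hw; apply: (Wt_ext _ (Wt_xm i 0 hw)).
have [K hK] := @nilp (xm i 0) (fun k => - A k i) hb hX mu u hu.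
have r1 : xm i 0 *m xp i 0 = xp i 0 *m xm i 0 + - h i 0.
  by rewrite rel_ef addrK.
have r2 : - h i 0 *m xm i 0 = xm i 0 *m - h i 0 + (2 * dF i) *: xm i 0.
  by rewrite mulNmx mulmxN rel_Hf opprB addrC.
have r3 : - h i 0 *m xp i 0 = xp i 0 *m - h i 0 - (2 * dF i) *: xp i 0.
  by rewrite mulNmx mulmxN rel_He opprD.
apply: (sl2_S1 r1 r2 r3 (dF_neq0 i) (K := K) (m := m)) => //.
rewrite mulNmx (Wt_H i hu) hm -scaleNr; congr (_ *: _).
by rewrite rmorphN /= mulrN opprK.
Qed.

Lemma Winv i mu u : Wt mu u -> u != 0 -> exists u', Wt (sref A i mu) u' /\ u' != 0.
Proof.
move=> hu hu0; case E : (mu i) => [m|m].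
- exists (ite m (xm i 0) u); split.
    apply: (Wt_ext _ (Wt_ite_xm i 0 m hu)) => k; by rewrite /sref E.
  apply/negP => /eqP h0; move/eqP: hu0; apply; exact: (S1Y hu E h0).
- exists (ite m.+1 (xp i 0) u); split.
    apply: (Wt_ext _ (Wt_ite_xp i 0 m.+1 hu)) => k; rewrite /sref E NegzE; ring.
  apply/negP => /eqP h0; move/eqP: hu0; apply; apply: (S2Y hu _ h0).
  by rewrite E NegzE.
Qed.

Lemma Winv_word t mu u : Wt mu u -> u != 0 ->
  exists u', Wt (weyl_act A t mu) u' /\ u' != 0.
Proof.
elim: t => [|j t IH] hu hu0; first by exists u.
have [u' [hw hn]] := IH hu hu0.
exact: (Winv j hw hn).
Qed.
End Rep.
Section Final.
Variables (R : realType) (l : nat) (A : 'I_l -> 'I_l -> int) (d : 'I_l -> nat) (n : nat).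
Variables (xp xm h : 'I_l -> nat -> 'M[R[i]]_n) (pi : 'I_l -> {poly R[i]}) (vplus : 'cV[R[i]]_n).
Hypothesis hC : simple_cartan_data A d.
Hypothesis hY : yangian_rep A d xp xm h.
Hypothesis hirr : irreducible_rep xp xm h.
Hypothesis hmon : forall k, pi k \is monic.
Hypothesis hdr : drinfeld_hw_vector d xp h pi vplus.

Local Notation F := R[i].

Lemma fAii : forall i, A i i = 2. Proof. by case: hC => _ [? _ _]. Qed.
Lemma fAoff : forall i j, i != j -> A i j <= 0. Proof. by case: hC => _ [_ ? _]. Qed.
Lemma fAzero : forall i j, (A i j == 0) = (A j i == 0). Proof. by case: hC => _ [_ _ ?]. Qed.
Lemma fdpos : forall i, (0 < d i)%N. Proof. by case: hC => _ _ _ [? _ _]. Qed.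
Lemma fdsym : forall i j, (d i)%:Z * A i j = (d j)%:Z * A j i. Proof. by case: hC => _ _ _ [_ _ ?]. Qed.
Lemma fposdef : forall x : 'I_l -> rat, (exists i, x i != 0) ->
         0 < \sum_i \sum_j x i * (d i)%:R * (A i j)%:~R * x j.
Proof. by case: hC. Qed.

Let lam : 'I_l -> int := fun k => ((size (pi k)).-1)%:Z.

Lemma hv0 : vplus != 0. Proof. by case: hdr. Qed.
Lemma hvp : forall i r, xp i r *m vplus = 0. Proof. by case: hdr. Qed.
Lemma hvh : forall i r, exists c, h i r *m vplus = c *: vplus.
Proof. case: hdr => _ _ [phi H] i r; exists (phi i r); by case: (H i). Qed.
Lemma hvw : Wt d h lam vplus.
Proof.
case: hdr => _ _ [phi H] i; case: (H i) => hl ->.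
rewrite (phi0 (hmon i) hl) /lam rmorphM /=; by [].
Qed.

Lemma hG : forall u, Gen xm vplus u.
Proof. exact: (Gen_all hY hirr hv0 hvh hvp). Qed.

Lemma Ainj : forall c : 'I_l -> int, (forall k, \sum_m A k m * c m = 0) -> forall k, c k = 0.
Proof. move=> c H k; exact: (Ac_inj fposdef H). Qed.

Let lv t := lowered_vec A (fun k => xm k 0%N) lam vplus t.

Lemma lam_ge0 k : 0 <= lam k. Proof. by []. Qed.

Lemma A_part w1 i t : red A (w1 ++ i :: t) -> 0 <= weyl_act A t lam i.
Proof.
move=> hr; apply: (a_nonneg fAii fdpos fAoff fAzero fdsym fposdef (red_suffix hr)).
exact: lam_ge0.
Qed.

Lemma Wt_lv t : forall w1, red A (w1 ++ t) -> Wt d h (weyl_act A t lam) (lv t).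
Proof.
elim: t => [|k t IH] w1 hr; first exact: hvw.
have hr' : red A ((w1 ++ [:: k]) ++ t) by rewrite -catA.
have hw := IH _ hr'.
have ha := A_part hr.
rewrite /lv /=; rewrite -/(lv t).
apply: (Wt_ext _ (Wt_ite_xm hY k 0 _ hw)) => j.
by rewrite /sref gez0_abs.
Qed.

Lemma B_part w1 i t : red A (w1 ++ i :: t) -> forall r, xp i r *m lv t = 0.
Proof.
move=> hr r; apply: contrapT => hne.
have hne' : xp i r *m lv t != 0 by apply/eqP.
have hr' : red A ((w1 ++ [:: i]) ++ t) by rewrite -catA.
have hw := Wt_xp hY i r (@Wt_lv t _ hr').
have [u' [hw' hu']] := Winv_word fAii fdpos hY (rev t) hw hne'.
pose c := ract A (rev t) (evec i).
have e : weyl_act A (rev t) (fun k => weyl_act A t lam k + A k i)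
         = fun k => lam k + Ac A c k.
  rewrite weyl_lin weyl_rev; last exact: fAii.
  by rewrite -Ac_evec weyl_Ac.
rewrite e in hw'.
have [ns hns] := wt_bound fdpos hY hvw hG hw' hu'.
have hz : forall k, c k + (ns k)%:Z = 0.
  apply: Ainj => k; have := hns k; rewrite /wtn /Ac => /eqP.
  rewrite -subr_eq0 => /eqP H.
  under eq_bigr => m _ do rewrite mulrDr.
  rewrite big_split /=.
  transitivity (lam k + \sum_m A k m * c m - (lam k - \sum_m A k m * (ns m)%:Z)); last exact: H.
  ring.
have hsuf : red A (i :: t) by apply: (red_suffix hr).
have [k hk] := key_nz fAii i t.
have hp := key_pos fAii fdpos fAoff fAzero fdsym fposdef hsuf k.
move: hk; rewrite -/c.
have := hz k; have : (0 : int) <= (ns k)%:Z by [].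
move: hp; rewrite -/c; move: (c k) (ns k)%:Z => a b ha hb hab.
have -> : a = 0 by lia.
by rewrite eqxx.
Qed.

Lemma Q_part t : forall w1, red A (w1 ++ t) ->
  forall u, Wt d h (weyl_act A t lam) u -> exists c, u = c *: lv t.
Proof.
elim: t => [|k t IH] w1 hr u hu.
  exact: (wt_lam_space fdpos hY Ainj hvw hG hu).
have hr' : red A ((w1 ++ [:: k]) ++ t) by rewrite -catA.
set mu' := weyl_act A t lam.
have ha : 0 <= mu' k := A_part hr.
set m := absz (mu' k).
have hm : mu' k = m%:Z by rewrite /m gez0_abs.
have hlv : lv (k :: t) = ite m (xm k 0) (lv t) by [].
have hu1 : Wt d h mu' (ite m (xp k 0) u).
  apply: (Wt_ext _ (Wt_ite_xp hY k 0 m hu)) => j.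
  change (sref A k mu' j + m%:Z * A j k = mu' j); rewrite /sref hm; ring.
have [c1 hc1] := IH _ hr' _ hu1.
have hwt := @Wt_lv t _ hr'.
have he : xp k 0 *m lv t = 0 by apply: (B_part (w1 := w1)).
have hH : h k 0 *m lv t = (dF F d k * m%:R) *: lv t.
  by rewrite hwt -/mu' hm rmorphM.
have L4 := sl2_L4 (rel_ef hY k) (rel_Hf fAii hY k) m he hH.
set P := \prod_(a < m) _ in L4.
have hP : P != 0.
  apply/prodf_neq0 => a _.
  have h1 : (a.+1%:R : F) != 0 by rewrite pnatr_eq0.
  have h2 : dF F d k != 0 by apply: dF_neq0; exact: fdpos.
  have h3 : (m%:R - a%:R : F) != 0.
    by rewrite -natrB ?pnatr_eq0 ?subn_eq0 -?ltnNge // ltnW.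
  by rewrite !mulf_neq0.
exists (c1 / P).
apply/eqP; rewrite -subr_eq0; apply/eqP.
apply: (S2Y fAii fdpos hY (i := k) (mu := sref A k mu') (m := m)).
- apply: WtD => //; rewrite -scaleN1r; apply: WtZ; apply: WtZ.
  rewrite hlv; apply: (Wt_ext _ (Wt_ite_xm hY k 0 m hwt)) => j.
  by rewrite /sref hm.
- by rewrite /sref hm fAii; ring.
- by rewrite iteB iteZ hlv L4 hc1 scalerA divfK // subrr.
Qed.

Theorem final (w : seq 'I_l) : reduced_word A w ->
  forall (w1 w2 : seq 'I_l) (rj : 'I_l), w = w1 ++ rj :: w2 ->
    0 <= weyl_act A w2 lam rj /\
    hw_for_Yi xp h rj (lowered_vec A (fun k => xm k 0%N) lam vplus w2).
Proof.
move=> /redE hred w1 w2 rj ew; rewrite ew in hred.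
split; first exact: (A_part hred).
split; first exact: (B_part hred).
move=> r.
have hr' : red A ((w1 ++ [:: rj]) ++ w2) by rewrite -catA.
have hw := @Wt_lv w2 _ hr'.
exact: (@Q_part w2 _ hr' _ (Wt_h hY rj r hw)).
Qed.

End Final.

Theorem mainTheorem3 (R : realType) (l : nat) (A : 'I_l -> 'I_l -> int)
    (d : 'I_l -> nat) (n : nat) (xp xm h : 'I_l -> nat -> 'M[R[i]]_n)
    (pi : 'I_l -> {poly R[i]}) (vplus : 'cV[R[i]]_n) (w : seq 'I_l) :
  simple_cartan_data A d ->
  yangian_rep A d xp xm h ->
  irreducible_rep xp xm h ->
  (forall k, pi k \is monic) ->
  drinfeld_hw_vector d xp h pi vplus ->
  reduced_word A w ->
  let lam_pi : 'I_l -> int := fun k => ((size (pi k)).-1)%:Z in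
  forall (w1 w2 : seq 'I_l) (rj : 'I_l), w = w1 ++ rj :: w2 ->
    0 <= weyl_act A w2 lam_pi rj /\
    hw_for_Yi xp h rj (lowered_vec A (fun k => xm k 0%N) lam_pi vplus w2).
Proof.
move=> hC hY hirr hmon hdr hred lam_pi w1 w2 rj ew.
have := @final R l A d n xp xm h pi vplus hC hY hirr hmon hdr w hred w1 w2 rj ew.
by [].
Qed.
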